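(* Suppose the $L$-smoothness assumption and the PL-condition with constant $\mu>0$ hold, and let $\{w_t\}_{t\ge0}$, $\{v_t\}_{t\ge0}$, $\{\hat D_t\}_{t\ge0}$ be generated by {\tt Scaled SARAH} with any step-size $\eta>0$. Then for every $t\ge0$, $$P(w_{t+1})-P^*\le\left(1-\frac{\eta\mu}{\Gamma}\right)(P(w_t)-P^* )+\frac{\eta}{2\alpha}\|\nabla P(w_t)-v_t\|^2-\left(\frac1{2\eta}-\frac{L}{2\alpha}\right)\|w_{t+1}-w_t\|^2_{\hat D_t}.$$
   Context: $P=\frac1n\sum_{i=1}^nf_i$ with $f_i:\mathbb{R}^d\to\mathbb{R}$, assumed to have a minimizer $w^*$, $P^*=P(w^* )$. $L$-smoothness assumption: each $f_i$ and $P$ are twice differentiable with $L$-Lipschitz gradients. PL-condition: $\|\nabla P(w)\|^2\ge2\mu(P(w)-P^* )$ for all $w$. $\Gamma=\sqrt d\,L$. $\|x\|_D^2=x^TDx$. For $J\subseteq[n]$, $\nabla^2P_J(w)=\frac1{|J|}\sum_{j\in J}\nabla^2 f_j(w)$; $\odot$ is the Hadamard product; $\mathrm{diag}(x)$ is the diagonal matrix with the entries of $x$. Preconditioner (parameters $\alpha>0$, $\beta\in(0,1)$, $m\ge1$): $D_0=\frac1m\sum_{j=1}^m\mathrm{diag}(z_j\odot\nabla^2P_{\mathcal{J}_j}(w_0)z_j)$, $D_t=\beta D_{t-1}+(1-\beta)\mathrm{diag}(z_t\odot\nabla^2P_{\mathcal{J}_t}(w_t)z_t)$ for $t\ge1$,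 with independent Rademacher vectors $z$ and random index sets $\mathcal{J}\subseteq[n]$; $\hat D_t$ diagonal with $(\hat D_t)_{ii}=\max\{\alpha,|(D_t)_{ii}|\}$. {\tt Scaled SARAH} (input $w_0$, $\eta$, $p\in(0,1]$): $v_0=\nabla P(w_0)$; for $t\ge0$: $w_{t+1}=w_t-\eta\hat D_t^{-1}v_t$; draw $i_{t+1}$ uniformly from $[n]$; with probability $p$, $v_{t+1}=\nabla P(w_{t+1})$, otherwise $v_{t+1}=v_t+\nabla f_{i_{t+1}}(w_{t+1})-\nabla f_{i_{t+1}}(w_t)$; update $\hat D_{t+1}$.
   Formalization: The preconditioner parameter α is assumed to satisfy α ≤ Γ = √d L as well as α > 0. The paper assumes this as well. *)

(* Defs.v *)
From HB Require Import structures.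
From mathcomp Require Import all_boot all_order all_algebra.
From mathcomp Require Import all_classical all_reals all_analysis.
Set Implicit Arguments. Unset Strict Implicit. Unset Printing Implicit Defensive.
Import Order.TTheory GRing.Theory Num.Theory.
Import numFieldNormedType.Exports.
Local Open Scope ring_scope.

Section Defs.
Variables (R : realType) (d : nat).

Definition dotv (x y : 'rV[R]_d) : R := \sum_(i < d) x 0 i * y 0 i.
Definition sqnorm (x : 'rV[R]_d) : R := \sum_(i < d) x 0 i ^+ 2.
Definition enorm (x : 'rV[R]_d) : R := Num.sqrt (sqnorm x).
(* ||x||_D^2 = x^T D x for the diagonal matrix D = diag(Dd) *)
Definition sqnormD (Dd x : 'rV[R]_d) : R := \sum_(i < d) Dd 0 i * x 0 i ^+ 2.

Definition is_gradient (f : 'rV[R]_d -> R) (g : 'rV[R]_d -> 'rV[R]_d) : Prop :=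
  forall x, differentiable f x /\
    ('d f x : 'rV[R]_d -> R) = (fun u => dotv u (g x)).

Definition is_hessian (g : 'rV[R]_d -> 'rV[R]_d) (H : 'rV[R]_d -> 'M[R]_d) : Prop :=
  forall x, differentiable g x /\
    ('d g x : 'rV[R]_d -> 'rV[R]_d) = (fun u => u *m (H x)^T).

Definition lipschitz_eucl (L : R) (g : 'rV[R]_d -> 'rV[R]_d) : Prop :=
  forall x y, enorm (g x - g y) <= L * enorm (x - y).

(* diag(z ⊙ (A z)) stored as the row vector of its diagonal entries *)
Definition hutch_diag (A : 'M[R]_d) (z : 'rV[R]_d) : 'rV[R]_d :=
  \row_i (z 0 i * \sum_(j < d) A i j * z 0 j).

Definition rademacher (z : 'rV[R]_d) : Prop :=
  forall i, z 0 i = 1 \/ z 0 i = -1.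

Definition Dhat (alpha : R) (Dd : 'rV[R]_d) : 'rV[R]_d :=
  \row_i Num.max alpha `|Dd 0 i|.

End Defs.

Definition hessJ (R : realType) (d n : nat) (H : 'I_n -> 'rV[R]_d -> 'M[R]_d)
  (J : {set 'I_n}) (w : 'rV[R]_d) : 'M[R]_d :=
  (#|J|%:R)^-1 *: \sum_(j in J) H j w.

Definition Pavg (R : realType) (d n : nat) (f : 'I_n -> 'rV[R]_d -> R)
  (w : 'rV[R]_d) : R := (n%:R)^-1 * \sum_(i < n) f i w.

Definition gradPavg (R : realType) (d n : nat) (g : 'I_n -> 'rV[R]_d -> 'rV[R]_d)
  (w : 'rV[R]_d) : 'rV[R]_d := (n%:R)^-1 *: \sum_(i < n) g i w.

(* Main.v *)
Require Import Defs.
From HB Require Import structures.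
From mathcomp Require Import all_boot all_order all_algebra.
From mathcomp Require Import all_classical all_reals all_analysis.
From mathcomp Require Import ring lra.
Import Order.TTheory GRing.Theory Num.Theory.
Import numFieldNormedType.Exports.
Local Open Scope ring_scope.

Section H.
Variables (R : realType) (d : nat).

Lemma sqnorm_ge0 (x : 'rV[R]_d) : 0 <= sqnorm x.
Proof. by apply: sumr_ge0 => i _; rewrite sqr_ge0. Qed.

Lemma sqnormZ (h : R) (x : 'rV[R]_d) : sqnorm (h *: x) = h ^+ 2 * sqnorm x.
Proof. rewrite /sqnorm mulr_sumr; apply: eq_bigr => i _; by rewrite mxE exprMn. Qed.

Lemma enormZ (h : R) (x : 'rV[R]_d) : enorm (h *: x) = `|h| * enorm x.
Proof. by rewrite /enorm sqnormZ sqrtrM ?sqr_ge0 // sqrtr_sqr. Qed.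

Lemma coord_le_enorm (x : 'rV[R]_d) i : `|x 0 i| <= enorm x.
Proof.
rewrite /enorm -sqrtr_sqr; apply: ler_wsqrtr.
rewrite /sqnorm (bigD1 i) //= lerDl; apply: sumr_ge0 => j _; exact: sqr_ge0.
Qed.

Lemma sqnorm_rad (z : 'rV[R]_d) : rademacher z -> sqnorm z = d%:R.
Proof.
move=> hz; rewrite /sqnorm (eq_bigr (fun _ => 1)).
  by rewrite sumr_const card_ord.
by move=> i _; case: (hz i) => ->; rewrite ?sqrrN expr1n.
Qed.

End H.

Section Aux.
Local Open Scope classical_set_scope.
Lemma hess_bound (R : realType) (d : nat) (g : 'rV[R]_d -> 'rV[R]_d) (H : 'rV[R]_d -> 'M[R]_d) L x u i :
 0 <= L -> is_hessian g H -> lipschitz_eucl L g -> `|(u *m (H x)^T) 0 i| <= L * enorm u.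
Proof.
move=> L0 hH hL.
have [dg dE] := hH x.
have -> : u *m (H x)^T = 'D_u g x by rewrite deriveE // dE.
have dv : derivable g x u := diff_derivable (v:=u) dg.
set F := fun h : R => h^-1 *: ((g \o shift x) (h *: u) - g x).
have cF : F @ 0^' --> 'D_u g x := dv.
have cF2 : (fun h => `|F h 0 i|) @ 0^' --> `|('D_u g x) 0 i|.
  apply: cvg_norm.
  exact: (cvg_comp _ _ cF (@coord_continuous _ 1 d 0 i _)).
apply: (cvgr_to_le cF2).
near=> h.
rewrite /F /= mxE normrM normfV.
have [->|h0] := eqVneq h 0.
  by rewrite normr0 invr0 mul0r mulr_ge0 // /enorm sqrtr_ge0.
rewrite ler_pdivrMl ?normr_gt0 //.
apply: le_trans; first exact: coord_le_enorm.
apply: (le_trans (hL _ _)).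
by rewrite addrK enormZ mulrCA.
Unshelve. all: by end_near.
Qed.

Lemma hutch_bound (R : realType) (d n : nat) (g : 'I_n -> 'rV[R]_d -> 'rV[R]_d)
  (H : 'I_n -> 'rV[R]_d -> 'M[R]_d) L (J : {set 'I_n}) w z i :
  0 <= L -> (forall k, is_hessian (g k) (H k)) -> (forall k, lipschitz_eucl L (g k)) ->
  rademacher z -> (0 < #|J|)%N ->
  `|hutch_diag (hessJ H J w) z 0 i| <= Num.sqrt d%:R * L.
Proof.
move=> L0 hH hL hz hJ.
rewrite /hutch_diag /hessJ mxE normrM.
have -> : `|z 0 i| = 1 by case: (hz i) => ->; rewrite ?normrN normr1.
rewrite mul1r.
have -> : \sum_(j < d) ((#|J|%:R)^-1 *: \sum_(k in J) H k w) i j * z 0 j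
   = (#|J|%:R)^-1 * \sum_(k in J) (z *m (H k w)^T) 0 i.
  rewrite (eq_bigr (fun j => (#|J|%:R)^-1 * \sum_(k in J) H k w i j * z 0 j)); last first.
    by move=> j _; rewrite !mxE summxE -mulrA mulr_suml.
  rewrite -mulr_sumr; congr (_ * _).
  rewrite exchange_big /=; apply: eq_bigr => k _.
  by rewrite !mxE; apply: eq_bigr => j _; rewrite !mxE mulrC.
have Sb k : `|(z *m (H k w)^T) 0 i| <= Num.sqrt d%:R * L.
  rewrite mulrC -(@sqnorm_rad R d z hz); exact: hess_bound.
rewrite normrM ger0_norm ?invr_ge0 ?ler0n //.
apply: (le_trans (ler_wpM2l _ (ler_norm_sum _ _ _))); first by rewrite invr_ge0 ler0n.
apply: (le_trans (ler_wpM2l _ (ler_sum _ (fun k _ => Sb k)))); first by rewrite invr_ge0 ler0n.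
rewrite sumr_const -[(Num.sqrt d%:R * L) *+ #|J|]mulr_natr mulrCA mulVf ?mulr1 //.
by rewrite pnatr_eq0 -lt0n.
Qed.
Lemma dot_young (R : realType) (d : nat) (a b : 'rV[R]_d) (c : R) : 0 < c ->
  2 * dotv a b <= c * sqnorm a + c^-1 * sqnorm b.
Proof.
move=> c0; rewrite /dotv /sqnorm !mulr_sumr -big_split /=.
apply: ler_sum => i _.
rewrite -subr_ge0.
have -> : c * a 0 i ^+ 2 + c^-1 * b 0 i ^+ 2 - 2 * (a 0 i * b 0 i)
   = (c * a 0 i - b 0 i) ^+ 2 * c^-1 by field; rewrite gt_eqF.
by rewrite mulr_ge0 ?sqr_ge0 // invr_ge0 ltW.
Qed.

Lemma sqnorm_enorm (R : realType) (d : nat) (a : 'rV[R]_d) : sqnorm a = enorm a ^+ 2.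
Proof. by rewrite /enorm sqr_sqrtr // sqnorm_ge0. Qed.

Lemma dotvB (R : realType) (d : nat) (a b c : 'rV[R]_d) : dotv a b - dotv a c = dotv a (b - c).
Proof. by rewrite /dotv -sumrB; apply: eq_bigr => i _; rewrite !mxE mulrBr. Qed.

Lemma phi_derive (R : realType) (d : nat) (P : 'rV[R]_d -> R) (G : 'rV[R]_d -> 'rV[R]_d) (x D : 'rV[R]_d) (s : R) :
  is_gradient P G ->
  is_derive s (1:R) (fun s : R => P (s *: D + x)) (dotv D (G (s *: D + x))).
Proof.
move=> hG; have [dP dE] := hG (s *: D + x).
have E : (fun h : R => h^-1 *: (((fun s => P (s *: D + x)) \o shift s) (h *: 1) - P (s *: D + x)))
  = (fun h => h^-1 *: ((P \o shift (s *: D + x)) (h *: D) - P (s *: D + x))).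
  apply/funext => h /=; congr (_ *: (P _ - _)).
  by rewrite [h%:A]mulr1 scalerDl addrA.
have dv : derivable P (s *: D + x) D := diff_derivable (v:=D) dP.
apply: DeriveDef; first by rewrite /derivable E.
by rewrite /derive E -/(derive _ _ _) deriveE // dE.
Qed.

Lemma descent (R : realType) (d : nat) (P : 'rV[R]_d -> R) (G : 'rV[R]_d -> 'rV[R]_d) L x y :
  0 < L -> is_gradient P G -> lipschitz_eucl L G ->
  P y <= P x + dotv (y - x) (G x) + L / 2 * sqnorm (y - x).
Proof.
move=> L0 hG hL.
set D := y - x.
set c1 := dotv D (G x).
set c2 := L / 2 * sqnorm D.
pose psi := fun s : R => P (s *: D + x) - (s * c1 + s ^+ 2 * c2).
have dpsi s : is_derive s (1:R) psi (dotv D (G (s *: D + x)) - (c1 + 2 * s * c2)).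
  apply: is_deriveB; first exact: phi_derive.
  pose p : {poly R} := c1 *: 'X + c2 *: 'X^2.
  have -> : (fun s => s * c1 + s ^+ 2 * c2) = horner p.
    apply/funext => r; rewrite /p !hornerE.
    rewrite /c2 /GRing.GRing_mul__canonical__SemiGroup_Law /=.
    ring.
  eapply is_derive_eq; first exact: is_derive_poly.
  rewrite /p !(derivD, derivZ, derivX, derivXn) !hornerE.
  by rewrite /c2 /GRing.GRing_mul__canonical__SemiGroup_Law /=; ring.
have cont : {within `[0, 1], continuous psi}.
  by apply: derivable_within_continuous => s _; case: (dpsi s).
have [c c01 E] := MVT ltr01 (fun s _ => dpsi s) cont.
have c0 : 0 < c by move: c01; rewrite in_itv /= => /andP[].
have key : dotv D (G (c *: D + x)) - (c1 + 2 * c * c2) <= 0.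
  rewrite opprD addrA /c1 dotvB subr_le0.
  set G' := G (c *: D + x) - G x.
  have Lc0 : 0 < L * c by rewrite mulr_gt0.
  have hy := @dot_young R d D G' (L * c) Lc0.
  have hG' : sqnorm G' <= (L * c) ^+ 2 * sqnorm D.
    rewrite !sqnorm_enorm -exprMn.
    have e0 : 0 <= enorm G' by rewrite /enorm sqrtr_ge0.
    have e1 : enorm G' <= L * c * enorm D.
      by have := hL (c *: D + x) x; rewrite addrK enormZ gtr0_norm // mulrA.
    by rewrite !expr2 ler_pM.
  have : (L * c)^-1 * sqnorm G' <= L * c * sqnorm D.
    rewrite ler_pdivrMl // mulrA -expr2 //.
  rewrite /c2; move: hy; set q := dotv D G'; lra.
move: E; rewrite /psi subr0 mulr1 scale1r scale0r add0r /D subrK mul0r expr0n /= mul0r addr0 subr0 expr1n mul1r.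
lra.
Qed.
End Aux.

Lemma termwise (R : realType) (A B Dh Dl eta alpha Gam L : R) :
  0 < eta -> 0 < alpha -> alpha <= Dh -> Dh <= Gam -> 0 <= L ->
  Dl = - (eta * Dh^-1 * B) ->
  Dl * A + L / 2 * Dl ^+ 2 -
  (eta / (2 * alpha) * (A - B) ^+ 2 - eta / (2 * Gam) * A ^+ 2
   - (1 / (2 * eta) - L / (2 * alpha)) * (Dh * Dl ^+ 2)) <= 0.
Proof.
move=> e0 a0 aD DG L0 ->.
have D0 : 0 < Dh := lt_le_trans a0 aD.
have G0 : 0 < Gam := lt_le_trans D0 DG.
set u := Dh^-1.
have u0 : 0 < u by rewrite invr_gt0.
have ua : u <= alpha^-1 by rewrite lef_pV2 ?posrE.
have uG : Gam^-1 <= u by rewrite lef_pV2 ?posrE.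
have -> : Dh = u^-1 by rewrite invrK.
have -> : forall X, X - (eta / (2 * alpha) * (A - B) ^+ 2 - eta / (2 * Gam) * A ^+ 2
   - (1 / (2 * eta) - L / (2 * alpha)) * (u^-1 * (- (eta * u * B)) ^+ 2)) = 
   X - (eta / (2 * alpha) * (A - B) ^+ 2 - eta / (2 * Gam) * A ^+ 2
   - (1 / (2 * eta) - L / (2 * alpha)) * (eta ^+ 2 * u * B ^+ 2)).
  by move=> X; congr (_ - (_ - _ * _)); field; rewrite gt_eqF.
have -> : - (eta * u * B) * A + L / 2 * (- (eta * u * B)) ^+ 2 -
   (eta / (2 * alpha) * (A - B) ^+ 2 - eta / (2 * Gam) * A ^+ 2 -
    (1 / (2 * eta) - L / (2 * alpha)) * (eta ^+ 2 * u * B ^+ 2))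
  = eta / 2 * ((u - alpha^-1) * (A - B) ^+ 2 + (Gam^-1 - u) * A ^+ 2)
    + L / 2 * eta ^+ 2 * u * B ^+ 2 * (u - alpha^-1).
  by field; rewrite !gt_eqF.
have t1 : (u - alpha^-1) * (A - B) ^+ 2 <= 0 by rewrite mulr_le0_ge0 ?sqr_ge0 // subr_le0.
have t2 : (Gam^-1 - u) * A ^+ 2 <= 0 by rewrite mulr_le0_ge0 ?sqr_ge0 // subr_le0.
have t3 : 0 <= L / 2 * eta ^+ 2 * u * B ^+ 2.
  apply: mulr_ge0; last exact: sqr_ge0.
  apply: mulr_ge0; last exact: ltW.
  apply: mulr_ge0; last exact: sqr_ge0.
  by apply: mulr_ge0 => //; rewrite invr_ge0.
have t4 : eta / 2 * ((u - alpha^-1) * (A - B) ^+ 2 + (Gam^-1 - u) * A ^+ 2) <= 0.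
  have e0w := ltW e0; apply: mulr_ge0_le0; [by rewrite mulr_ge0 // invr_ge0 | lra].
have t5 : L / 2 * eta ^+ 2 * u * B ^+ 2 * (u - alpha^-1) <= 0.
  by apply: mulr_ge0_le0 => //; rewrite subr_le0.
lra.
Qed.

Theorem lemma3 (R : realType) (d n : nat)
  (f : 'I_n -> 'rV[R]_d -> R)
  (g : 'I_n -> 'rV[R]_d -> 'rV[R]_d)
  (H : 'I_n -> 'rV[R]_d -> 'M[R]_d)
  (HP : 'rV[R]_d -> 'M[R]_d)
  (L mu : R) (wstar : 'rV[R]_d)
  (alpha beta eta p : R) (m : nat)
  (z0 : 'I_m -> 'rV[R]_d) (J0 : 'I_m -> {set 'I_n})
  (z : nat -> 'rV[R]_d) (J : nat -> {set 'I_n})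
  (idx : nat -> 'I_n) (coin : nat -> bool)
  (w v Dd : nat -> 'rV[R]_d) :
  (0 < n)%N ->
  (* L-smoothness *)
  (forall i, is_gradient (f i) (g i)) ->
  (forall i, is_hessian (g i) (H i)) ->
  (forall i, lipschitz_eucl L (g i)) ->
  is_gradient (Pavg f) (gradPavg g) ->
  is_hessian (gradPavg g) HP ->
  lipschitz_eucl L (gradPavg g) ->
  (* minimizer *)
  (forall w', Pavg f wstar <= Pavg f w') ->
  (* PL condition *)
  0 < mu ->
  (forall w', 2 * mu * (Pavg f w' - Pavg f wstar) <= sqnorm (gradPavg g w')) ->
  (* preconditioner parameters (see NOTES: alpha <= Gamma) *)
  0 < alpha -> alpha <= Num.sqrt (d%:R) * L ->
  0 < beta -> beta < 1 -> (0 < m)%N ->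
  0 < p -> p <= 1 ->
  0 < eta ->
  (* Rademacher vectors and (nonempty) index sets *)
  (forall j, rademacher (z0 j)) -> (forall t, rademacher (z t)) ->
  (forall j, (0 < #|J0 j|)%N) -> (forall t, (0 < #|J t|)%N) ->
  (* preconditioner recursion *)
  Dd 0%N = (m%:R)^-1 *: \sum_(j < m) hutch_diag (hessJ H (J0 j) (w 0%N)) (z0 j) ->
  (forall t, Dd t.+1 = beta *: Dd t
                     + (1 - beta) *: hutch_diag (hessJ H (J t.+1) (w t.+1)) (z t.+1)) ->
  (* Scaled SARAH *)
  v 0%N = gradPavg g (w 0%N) ->
  (forall t i, w t.+1 0 i = w t 0 i - eta * (Dhat alpha (Dd t) 0 i)^-1 * v t 0 i) ->
  (forall t, v t.+1 = if coin t.+1 then gradPavg g (w t.+1)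
                      else v t + g (idx t.+1) (w t.+1) - g (idx t.+1) (w t)) ->
  forall t : nat,
    Pavg f (w t.+1) - Pavg f wstar <=
      (1 - eta * mu / (Num.sqrt (d%:R) * L)) * (Pavg f (w t) - Pavg f wstar)
      + eta / (2 * alpha) * sqnorm (gradPavg g (w t) - v t)
      - (1 / (2 * eta) - L / (2 * alpha)) * sqnormD (Dhat alpha (Dd t)) (w t.+1 - w t).
Proof.
move=> n0 hgi hHi hLi hgP hHP hLP hmin mu0 hPL a0 aG b0 b1 m0 p0 p1 e0 hz0 hz hJ0 hJ hD0 hDS hv0 hw hv t.
set Gam := Num.sqrt d%:R * L.
have G0 : 0 < Gam := lt_le_trans a0 aG.
have L0 : 0 < L.
  rewrite ltNge; apply/negP => hL.
  have : Gam <= 0 by rewrite /Gam mulr_ge0_le0 // sqrtr_ge0.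
  by rewrite leNgt G0.
have Db : forall s i, `|Dd s 0 i| <= Gam.
  elim=> [|s IH] i.
    rewrite hD0 mxE summxE normrM ger0_norm ?invr_ge0 ?ler0n //.
    apply: (le_trans (ler_wpM2l _ (ler_norm_sum _ _ _))); first by rewrite invr_ge0 ler0n.
    have hb j : `|hutch_diag (hessJ H (J0 j) (w 0%N)) (z0 j) 0 i| <= Gam.
      exact: (@hutch_bound R d n g H L (J0 j) (w 0%N) (z0 j) i (ltW L0) hHi hLi (hz0 j) (hJ0 j)).
    apply: (le_trans (ler_wpM2l _ (ler_sum _ (fun j _ => hb j)))); first by rewrite invr_ge0 ler0n.
    rewrite sumr_const card_ord -[Gam *+ m]mulr_natr mulrCA mulVf ?mulr1 //.
    by rewrite pnatr_eq0 -lt0n.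
  have hb : `|hutch_diag (hessJ H (J s.+1) (w s.+1)) (z s.+1) 0 i| <= Gam.
    exact: (@hutch_bound R d n g H L (J s.+1) (w s.+1) (z s.+1) i (ltW L0) hHi hLi (hz _) (hJ _)).
  rewrite hDS; set hh := hutch_diag _ _ in hb *; clearbody hh; rewrite !mxE.
  apply: (le_trans (ler_normD _ _)).
  rewrite !normrM (gtr0_norm b0) (gtr0_norm (_ : 0 < 1 - beta)); last by rewrite subr_gt0.
  have b1' : 0 <= 1 - beta by rewrite subr_ge0 ltW.
  have := ler_wpM2l (ltW b0) (IH i); have := ler_wpM2l b1' hb.
  lra.
have Dhb i : alpha <= Dhat alpha (Dd t) 0 i /\ Dhat alpha (Dd t) 0 i <= Gam.
  rewrite mxE; split; first by rewrite le_max lexx.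
  by rewrite ge_max aG Db.
have desc := @descent R d (Pavg f) (gradPavg g) L (w t) (w t.+1) L0 hgP hLP.
have pl := hPL (w t).
set A := gradPavg g (w t) in desc pl *.
set Pw := Pavg f (w t) in desc pl *.
set Ps := Pavg f wstar in desc pl *.
set P1 := Pavg f (w t.+1) in desc *.
have hsum : dotv (w t.+1 - w t) A + L / 2 * sqnorm (w t.+1 - w t) -
    (eta / (2 * alpha) * sqnorm (A - v t) - eta / (2 * Gam) * sqnorm A
     - (1 / (2 * eta) - L / (2 * alpha)) * sqnormD (Dhat alpha (Dd t)) (w t.+1 - w t)) <= 0.
  rewrite /dotv /sqnorm /sqnormD !mulr_sumr -!sumrB -!big_split -!sumrB /=.
  apply: (le_trans (y := \sum_(i < d) (0:R))); last by rewrite big1.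
  apply: ler_sum => i _.
  have [h1 h2] := Dhb i.
  rewrite [(A - v t) 0 i]mxE [(- v t) 0 i]mxE.
  have := @termwise R (A 0 i) (v t 0 i) (Dhat alpha (Dd t) 0 i) ((w t.+1 - w t) 0 i) eta alpha Gam L e0 a0 h1 h2 (ltW L0).
  apply; rewrite mxE [(- w t) 0 i]mxE hw; ring.
have plb : eta / (2 * Gam) * (2 * mu * (Pw - Ps)) <= eta / (2 * Gam) * sqnorm A.
  by rewrite ler_wpM2l // mulr_ge0 ?invr_ge0 ?mulr_ge0 // ltW.
have eq1 : eta / (2 * Gam) * (2 * mu * (Pw - Ps)) = eta * mu / Gam * (Pw - Ps).
  by field; rewrite gt_eqF.
lra.
Qed.
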